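(* Let $t(n)=\operatorname{num}_{\mathcal T}(n,1)$ for $n\ge1$ and $t(0)=1$. Then $t(3n)=t(3n+1)=t(3n+2)$ for all $n\ge0$, and $t(3n)-t(3n-2)=2^{2n}t(n)$ for all $n\ge1$.
   Context: A ternary partition of $n$ is a partition of $n$ (finite nonincreasing sequence of positive integers summing to $n$) all of whose parts are powers of $3$ (including $1$); $\mathcal T(n)$ is the set of ternary partitions of $n$, and $m_\lambda(i)$ the number of parts of $\lambda$ equal to $i$. For $\lambda\in\mathcal T(n)$ let $h_{\mathcal T,\lambda}(x)=\prod_{k\ge0}(1+x^{3^k})^{\lfloor n/3^k\rfloor-m_\lambda(3^k)}$. Let $G_{\mathcal T}(n,x)=\gcd\{h_{\mathcal T,\lambda}(x):\lambda\in\mathcal T(n)\}$ in $\mathbb{Z}[x]$ (normalized with positive leading coefficient), and $\operatorname{num}_{\mathcal T}(n,x)=\frac{1}{G_{\mathcal T}(n,x)}\sum_{\lambda\in\mathcal T(n)}h_{\mathcal T,\lambda}(x)\in\mathbb{Z}[x]$. *)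

(* Defs.v *)
From HB Require Import structures.
From mathcomp Require Import all_boot all_order all_algebra.
From Stdlib Require Import ClassicalEpsilon.
Set Implicit Arguments. Unset Strict Implicit. Unset Printing Implicit Defensive.
Import Order.TTheory GRing.Theory Num.Theory.

(* x is a power of 3 (3^k with k <= x suffices since 3^k > k) *)
Definition is_pow3 (x : nat) : bool := has (fun k => x == 3 ^ k) (iota 0 x.+1).

Definition is_tpart (n : nat) (l : seq nat) : bool :=
  [&& sorted geq l, all (fun x => 0 < x) l, all is_pow3 l & sumn l == n].

Fixpoint seqs_upto (k : nat) (vals : seq nat) : seq (seq nat) :=
  match k with
  | 0 => [:: [::]]
  | k'.+1 => [::] :: [seq x :: s | x <- vals, s <- seqs_upto k' vals]
  end.

(* T(n): the (duplicate-free) list of all ternary partitions of n.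
   Every partition of n has length <= n and parts in 1..n. *)
Definition tparts (n : nat) : seq (seq nat) :=
  undup [seq l <- seqs_upto n (iota 1 n) | is_tpart n l].

Local Open Scope ring_scope.

(* h_{T,lambda}(x) = prod_k (1 + x^(3^k))^(floor(n/3^k) - m_lambda(3^k));
   factors with 3^k > n have exponent 0, so k ranges over 0..n. *)
Definition hT (n : nat) (l : seq nat) : {poly int} :=
  \prod_(k < n.+1) (1 + 'X^(3 ^ k)) ^+ (n %/ 3 ^ k - count_mem (3 ^ k) l)%N.

Definition dvdZ (d p : {poly int}) : Prop := exists q : {poly int}, p = q * d.

Definition is_gcdZ (s : seq {poly int}) (g : {poly int}) : Prop :=
  (forall p, p \in s -> dvdZ g p) /\
  (forall d, (forall p, p \in s -> dvdZ d p) -> dvdZ d g) /\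
  0 < lead_coef g.

Definition GT (n : nat) : {poly int} :=
  epsilon (inhabits 0) (is_gcdZ [seq hT n l | l <- tparts n]).

Definition numT (n : nat) : {poly int} :=
  epsilon (inhabits 0) (fun q => q * GT n = \sum_(l <- tparts n) hT n l).

Definition t (n : nat) : int := if n == 0%N then 1 else (numT n).[1].

(* Main.v *)
Require Import Defs.
From mathcomp Require Import all_boot all_order all_algebra all_field.
From mathcomp Require Import zify.
From Stdlib Require Import ClassicalEpsilon.
Import Order.TTheory GRing.Theory Num.Theory.

Section Comb.

Lemma seqs_upto_mem k vals l : size l <= k -> all (mem vals) l -> l \in seqs_upto k vals.
Proof.
elim: k l => [|k IH] [|x l] //=; rewrite ?in_cons ?eqxx //.
move=> Hs /andP[Hx Hl]; apply/orP; right.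
exact: (allpairs_f (fun x s => x :: s) Hx (IH _ Hs Hl)).
Qed.

Lemma size_le_sumn l : all (fun x => 0 < x) l -> size l <= sumn l.
Proof. elim: l => //= x l IH /andP[Hx Hl]; have := IH Hl; lia. Qed.

Lemma le_sumn l x : x \in l -> x <= sumn l.
Proof. elim: l => //= y l IH; rewrite in_cons => /orP[/eqP->|/IH]; lia. Qed.

Lemma mem_tparts n l : (l \in tparts n) = is_tpart n l.
Proof.
rewrite mem_undup mem_filter; apply: andb_idr => H.
case/and4P: (H) => _ Hpos _ /eqP Hsum.
apply: seqs_upto_mem; first by rewrite -Hsum size_le_sumn.
apply/allP => x Hx; change (x \in iota 1 n); rewrite mem_iota; have := le_sumn _ _ Hx.
move/allP: Hpos => /(_ x Hx) /=; lia.
Qed.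

Lemma uniq_tparts n : uniq (tparts n).
Proof. exact: undup_uniq. Qed.

Lemma is_pow3P x : reflect (exists k, x = 3 ^ k) (is_pow3 x).
Proof.
apply: (iffP hasP) => [[k _ /eqP ->]|[k ->]]; first by exists k.
exists k => //; rewrite mem_iota add0n ltnS; exact/ltnW/ltn_expl.
Qed.

Lemma pow3_div x : is_pow3 x -> 1 < x -> x = 3 * (x %/ 3) /\ is_pow3 (x %/ 3).
Proof.
case/is_pow3P => [[|k] ->] //= _.
rewrite expnS mulKn //; split => //; apply/is_pow3P; by exists k.
Qed.

Lemma pow3_mul x : is_pow3 x -> is_pow3 (3 * x).
Proof. by case/is_pow3P => k ->; apply/is_pow3P; exists k.+1; rewrite expnS. Qed.

Definition big (l : seq nat) := [seq x <- l | 1 < x].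
Definition gg m j (l : seq nat) := map (muln 3) l ++ nseq (m - 3 * j) 1.

Lemma geq_trans : transitive geq.
Proof. move=> y x z /= H1 H2; exact: leq_trans H2 H1. Qed.

Lemma split_sorted l : sorted geq l -> all (fun x => 0 < x) l ->
  l = big l ++ nseq (count (pred1 1) l) 1.
Proof.
elim: l => //= x s IH Hp /andP[Hx Hs].
have Hss := path_sorted Hp.
case: ltnP => Hx1.
  by rewrite /= {1}(IH Hss Hs) (_ : (x == 1) = false) //; apply/negbTE; lia.
have Hx1' : x = 1 by lia.
have Hall : all (pred1 1) s.
  apply/allP => y Hy; have := order_path_min geq_trans Hp; move/allP => /(_ y Hy) /=.
  move/allP: Hs => /(_ y Hy); rewrite Hx1' /=; lia.
have -> : big s = [::].
  by rewrite /big (eq_in_filter (a2 := pred0)) ?filter_pred0 // => y /(allP Hall) /= /eqP ->.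
rewrite Hx1' /= add0n; congr (_ :: _).
have E := all_pred1P _ _ Hall; rewrite {1}E; congr nseq.
by move: Hall; rewrite all_count => /eqP ->.
Qed.

Lemma sumn_map3 l : sumn (map (muln 3) l) = 3 * sumn l.
Proof. elim: l => //= x l ->; lia. Qed.

Lemma sorted_cat_ones s a : sorted geq s -> all (fun x => 0 < x) s ->
  sorted geq (s ++ nseq a 1).
Proof.
have Hp : forall y b, 0 < y -> path geq y (nseq b 1).
  by move=> y b; elim: b y => //= b IH y Hy; rewrite IH // andbT.
case: s => [|x s]; first by case: a => //= a _ _; exact: Hp.
move=> Hs Hpos; rewrite /= cat_path; apply/andP; split; first exact: Hs.
apply: Hp; move/allP: Hpos; apply; exact: mem_last.
Qed.

Lemma tcomp m j l' : j <= m %/ 3 -> is_tpart j l' ->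
  is_tpart m (gg m j l') /\ sumn (big (gg m j l')) = 3 * j.
Proof.
move=> Hj /and4P[Hs Hpos Hp3 /eqP Hsum].
have Hbig : big (gg m j l') = map (muln 3) l'.
  rewrite /big /gg filter_cat filter_nseq /= cats0.
  apply/all_filterP; rewrite all_map; apply/allP => x Hx /=.
  move/allP: Hpos => /(_ x Hx) /=; lia.
rewrite Hbig sumn_map3 Hsum; split => //.
apply/and4P; split.
- apply: sorted_cat_ones.
  + by apply: (homo_sorted _ _ Hs) => x y /=; rewrite leq_mul2l.
  + rewrite all_map; apply/allP => x Hx /=; move/allP: Hpos => /(_ x Hx) /=; lia.
- rewrite all_cat all_map all_nseq orbT andbT; apply/allP => x Hx /=.
  move/allP: Hpos => /(_ x Hx) /=; lia.
- rewrite all_cat all_map all_nseq orbT andbT; apply/allP => x Hx /=.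
  apply: pow3_mul; exact: (allP Hp3).
- rewrite sumn_cat sumn_map3 sumn_nseq Hsum; apply/eqP.
  have : 3 * j <= m by rewrite mulnC -leq_divRL.
  lia.
Qed.

Lemma decomp m l : is_tpart m l ->
  let l' := map (divn^~ 3) (big l) in
  [/\ sumn l' <= m %/ 3, is_tpart (sumn l') l', l = gg m (sumn l') l'
    & sumn (big l) = 3 * sumn l'].
Proof.
move=> /and4P[Hs Hpos Hp3 /eqP Hsum] l'.
have Hb : forall x, x \in big l -> x = 3 * (x %/ 3) /\ is_pow3 (x %/ 3).
  move=> x; rewrite mem_filter => /andP[Hx1 Hx]; apply: pow3_div => //.
  exact: (allP Hp3).
have Hmap : map (muln 3) l' = big l.
  rewrite -map_comp map_id_in // => x /Hb [] /= Hx _; exact/esym.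
have Hsb : sumn (big l) = 3 * sumn l' by rewrite -Hmap sumn_map3.
have Hspl := split_sorted _ Hs Hpos.
have Hsum2 : sumn (big l) + count (pred1 1) l = m.
  by rewrite -Hsum {3}Hspl sumn_cat sumn_nseq mul1n.
have Hj : sumn l' <= m %/ 3 by rewrite leq_divRL // mulnC -Hsb -Hsum2 leq_addr.
split => //.
- apply/and4P; split.
  + apply: (homo_sorted _ _ (sorted_filter geq_trans _ Hs)) => x y /=.
    exact: leq_div2r.
  + rewrite all_map; apply/allP => x Hx /=.
    case: (Hb x Hx) => Hx3 _; move: Hx; rewrite mem_filter => /andP[Hx1 _]; lia.
  + rewrite all_map; apply/allP => x Hx /=; by case: (Hb x Hx).
  + by [].
- rewrite /gg Hmap {1}Hspl; congr (_ ++ nseq _ _); lia.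
Qed.

Lemma tparts_block m j : j <= m %/ 3 ->
  perm_eq [seq l <- tparts m | sumn (big l) == 3 * j] (map (gg m j) (tparts j)).
Proof.
move=> Hj; apply: uniq_perm.
- exact: filter_uniq (uniq_tparts m).
- rewrite map_inj_uniq ?uniq_tparts // => l1 l2 E.
  have Hsz : size l1 = size l2.
    by move: (congr1 size E); rewrite /gg !size_cat !size_map => /addIn.
  move/eqP: E; rewrite /gg eqseq_cat ?size_map // => /andP[/eqP H _].
  by apply: (inj_map _ H) => x y /eqP; rewrite eqn_pmul2l // => /eqP.
- move=> l; rewrite mem_filter mem_tparts; apply/idP/mapP.
  + case/andP => /eqP Hsb Hl; move: (decomp _ _ Hl); rewrite /= => -[Hj' Hl' Heq Hsb'].
    have Hs : sumn [seq x %/ 3 | x <- big l] = j by lia.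
    exists [seq x %/ 3 | x <- big l]; first by rewrite mem_tparts -Hs.
    by rewrite {1}Heq Hs.
  + case=> l' Hl' ->; rewrite mem_tparts in Hl'.
    have [H1 H2] := tcomp _ _ _ Hj Hl'; by rewrite H1 H2 eqxx.
Qed.

Definition tw m := \sum_(l <- tparts m) 2 ^ (m - size l).

Lemma tw_rec m : tw m = \sum_(j < (m %/ 3).+1) 4 ^ j * tw j.
Proof.
rewrite /tw.
transitivity (\sum_(l <- tparts m) \sum_(j < (m%/3).+1)
   (if sumn (big l) == 3 * j then 2^(m - size l) else 0)).
  rewrite big_seq [RHS]big_seq; apply: eq_bigr => l; rewrite mem_tparts => Hl.
  move: (decomp _ _ Hl); rewrite /= => -[Hj _ _ Hsb].
  have Hj' : sumn [seq x %/ 3 | x <- big l] < (m %/ 3).+1 by rewrite ltnS.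
  rewrite (bigD1 (Ordinal Hj')) //= Hsb eqxx big1 ?addn0 // => i Hi.
  rewrite eqn_pmul2l //; case: eqP => // E; move: Hi; rewrite -val_eqE /= E eqxx //.
rewrite exchange_big /=; apply: eq_bigr => [[j Hj]] _ /=.
rewrite -big_mkcond /= -big_filter.
rewrite (perm_big _ (tparts_block _ _ Hj)) big_map big_distrr /=.
apply: eq_big_seq => l'; rewrite mem_tparts => Hl'.
have Hsz : size l' <= j.
  by case/and4P: Hl' => _ Hpos _ /eqP <-; exact: size_le_sumn.
have H3 : 3 * j <= m by rewrite mulnC -leq_divRL.
rewrite /gg size_cat size_map size_nseq.
have -> : m - (size l' + (m - 3 * j)) = 2 * j + (j - size l') by lia.
by rewrite expnD expnM.
Qed.
End Comb.

Section Alg1.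
Local Open Scope ring_scope.

Definition phi (p : {poly int}) : {poly algC} := map_poly (intr : int -> algC) p.

Lemma phiM p q : phi (p * q) = phi p * phi q.
Proof. by rewrite /phi rmorphM. Qed.

Lemma phi_inj : injective phi.
Proof. apply: map_inj_poly; [exact: intr_inj | by rewrite mulr0z]. Qed.

Lemma size_phi p : size (phi p) = size p.
Proof. apply: size_map_inj_poly; [exact: intr_inj | by rewrite mulr0z]. Qed.

Lemma phiA m : phi (1 + 'X^m) = 1 + 'X^m.
Proof. by rewrite /phi rmorphD rmorph1 rmorphXn /= map_polyX. Qed.

Lemma mup_pow (F : fieldType) (z : F) p a : p != 0 -> mup z (p ^+ a) = (a * mup z p)%N.
Proof.
move=> Hp; elim: a => [|a IH]; first by rewrite expr0 mupNroot // root1.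
by rewrite exprS mupM ?expf_neq0 // IH mulSn.
Qed.

Lemma mup_prodX (F : fieldType) (z : F) (I : Type) (r : seq I) (P : I -> {poly F}) (a : I -> nat) :
  (forall i, P i != 0) ->
  mup z (\prod_(i <- r) P i ^+ a i) = (\sum_(i <- r) a i * mup z (P i))%N.
Proof.
move=> HP; elim: r => [|i r IH]; first by rewrite !big_nil mupNroot // root1.
have Hprod : \prod_(j <- r) P j ^+ a j != 0.
  by rewrite prodf_seq_neq0; elim: (r) => //= j r0 ->; rewrite andbT expf_neq0.
by rewrite !big_cons mupM ?expf_neq0 ?mup_pow ?IH.
Qed.

Lemma mupA (z : algC) m : (0 < m)%N ->
  mup z (1 + 'X^m) = (z ^+ m == -1) :> nat.
Proof.
move=> Hm.
have Hr : root (1 + 'X^m) z = (z ^+ m == -1).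
  by rewrite /root hornerD hornerXn hornerC addrC addr_eq0.
have Hnz : (1 + 'X^m : {poly algC}) != 0.
  by apply/negP => /eqP H; move: (congr1 (horner^~ 0) H); rewrite hornerD hornerXn hornerC expr0n gtn_eqF // addr0 horner0; apply/eqP; exact: oner_neq0.
case: (boolP (z ^+ m == -1)) => Hz; last by rewrite mupNroot // Hr.
apply/eqP; rewrite eqn_leq mup_leq // mup_geq // expr1 dvdp_XsubCl Hr Hz andbT.
rewrite separable_nosquare // ?size_XsubC //.
rewrite unlock; apply/Bezout_coprimepP.
exists (1, - (m%:R^-1 *: 'X)); rewrite /= derivD derivC derivXn add0r mul1r.
rewrite mulNr -scalerAl mulrnAr -exprS prednK // -scaler_nat scalerA mulVf ?pnatr_eq0 -?lt0n //.
by rewrite scale1r addrK eqpxx.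
Qed.
End Alg1.

Section Nat2.
Set Implicit Arguments. Unset Strict Implicit.

Lemma sum_count N (l : seq nat) (f : nat -> nat) :
  (forall x, x \in l -> exists2 k, k < N & x = 3 ^ k) ->
  \sum_(k < N) count_mem (3 ^ k) l * f k = \sum_(x <- l) f (trunc_log 3 x).
Proof.
elim: l => [|x l IH] Hl; first by rewrite big_nil big1 // => k _; rewrite mul0n.
rewrite big_cons -IH; last by move=> y Hy; apply: Hl; rewrite in_cons Hy orbT.

have [j Hj ->] := Hl x (mem_head _ _).
rewrite trunc_expnK //.
rewrite (eq_bigr (fun k : 'I_N => (j == k) * f k + count_mem (3 ^ k) l * f k)); last first.
  by move=> k _ /=; rewrite eqn_exp2l // mulnDl.
rewrite big_split /=; congr (_ + _).
rewrite (bigD1 (Ordinal Hj)) //= eqxx mul1n big1 ?addn0 // => k Hk.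
by rewrite eq_sym -val_eqE /= in Hk; rewrite (negbTE Hk).
Qed.

Lemma tpart_pow n l : is_tpart n l -> forall x, x \in l -> exists2 k, k < n.+1 & x = 3 ^ k.
Proof.
case/and4P => _ Hpos Hp3 /eqP Hs x Hx.
have /hasP [k Hk /eqP Hxk] := allP Hp3 x Hx.
exists k => //; move: Hk; rewrite mem_iota add0n ltnS => Hk.
by rewrite ltnS (leq_trans Hk) // -Hs le_sumn.
Qed.

Lemma tpart_size n l : is_tpart n l -> \sum_(k < n.+1) count_mem (3 ^ k) l = size l.
Proof.
move=> H; rewrite -sum1_size -(@sum_count _ _ (fun _ => 1) (tpart_pow H)).
by apply: eq_bigr => k _; rewrite muln1.
Qed.

Lemma tpart_sum n l : is_tpart n l -> \sum_(k < n.+1) count_mem (3 ^ k) l * 3 ^ k = n.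
Proof.
move=> H; rewrite (@sum_count _ _ (fun k => 3 ^ k) (tpart_pow H)).
case/and4P: H => _ _ Hp3 /eqP <-; rewrite sumnE big_seq [RHS]big_seq.
apply: eq_bigr => x Hx; have /is_pow3P [k ->] := allP Hp3 x Hx.
by rewrite trunc_expnK.
Qed.

Lemma tpart_le n l k : is_tpart n l -> k < n.+1 -> count_mem (3 ^ k) l <= n %/ 3 ^ k.
Proof.
move=> H Hk; rewrite leq_divRL ?expn_gt0 // -[X in _ <= X](tpart_sum H).
by rewrite (bigD1 (Ordinal Hk)) //= leq_addr.
Qed.

Lemma tpart_tail n l i : is_tpart n l ->
  \sum_(k < n.+1) count_mem (3 ^ k) l * (i <= k) <= n %/ 3 ^ i.
Proof.
move=> H; rewrite leq_divRL ?expn_gt0 // -[X in _ <= X](tpart_sum H) big_distrl /=.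
apply: leq_sum => k _; rewrite -mulnA leq_mul2l; apply/orP; right.
by case: (leqP i k) => Hik; rewrite ?mul1n ?mul0n // leq_pexp2l.
Qed.

Definition lam n i := nseq (n %/ 3 ^ i) (3 ^ i) ++ nseq (n %% 3 ^ i) 1.

Lemma lam_tpart n i : is_tpart n (lam n i).
Proof.
apply/and4P; split.
- apply: sorted_cat_ones; last by rewrite all_nseq expn_gt0 orbT.
  by elim: (n %/ 3 ^ i) => //= a IH; case: a IH => //= a ->; rewrite leqnn.
- by rewrite all_cat !all_nseq expn_gt0 !orbT.
- rewrite all_cat !all_nseq !orbT andbT; apply/orP; right; apply/is_pow3P; by exists i.
- by rewrite sumn_cat !sumn_nseq mul1n mulnC -divn_eq.
Qed.

Lemma lam_count n i k : i <= k ->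
  count_mem (3 ^ k) (lam n i) = if k == i then n %/ 3 ^ i else 0.
Proof.
move=> Hik; rewrite count_cat !count_nseq /=.
have E1 : (3 ^ i == 3 ^ k) = (k == i) by rewrite eqn_exp2l // eq_sym.
have E2 : (1 == 3 ^ k) = (k == 0) by rewrite -(expn0 3) eqn_exp2l // eq_sym.
rewrite E1 E2; case: eqP => [->|Hki]; last first.
  by rewrite (_ : (k == 0) = false) //; apply/negbTE; lia.
by case: eqP => [->|_]; rewrite ?expn0 ?modn1 /=; lia.
Qed.

Definition Mh n i l := \sum_(k < n.+1) (n %/ 3 ^ k - count_mem (3 ^ k) l) * (i <= k).
Definition MG n i := \sum_(k < n) (n %/ 3 ^ k.+1) * (i <= k).

Lemma MG_alt n i : MG n i = \sum_(k < n.+1) (n %/ 3 ^ k) * (i < k).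
Proof. by rewrite big_ord_recl /= muln0 add0n. Qed.

Lemma Mh_lam n i : Mh n i (lam n i) = MG n i.
Proof.
rewrite MG_alt; apply: eq_bigr => k _.
case: (leqP i k) => Hik; last by rewrite ltnNge (ltnW Hik) /= !muln0.
rewrite (lam_count n Hik); case: eqP => [->|Hki]; first by rewrite subnn ltnn /= muln0.
have Hlt : i < k by lia.
by rewrite Hlt /= subn0.
Qed.

Lemma Mh_ge n i l : is_tpart n l -> MG n i <= Mh n i l.
Proof.
move=> H; rewrite MG_alt.
set Se := \sum_(k < n.+1) (n %/ 3 ^ k) * (i <= k).
set Sm := \sum_(k < n.+1) count_mem (3 ^ k) l * (i <= k).
set Mg := \sum_(k < n.+1) (n %/ 3 ^ k) * (i < k).
set Ei := \sum_(k < n.+1) (n %/ 3 ^ k) * (i == k).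
have E1 : Mh n i l + Sm = Se.
  rewrite /Mh /Sm /Se -big_split; apply: eq_bigr => k _ /=.
  by rewrite -mulnDl subnK // tpart_le.
have E2 : Se = Mg + Ei.
  rewrite /Se /Mg /Ei -big_split; apply: eq_bigr => k _ /=.
  by case: (ltngtP i k) => _ /=; rewrite ?muln1 ?muln0 ?addn0 ?add0n.
have E3 : Sm <= Ei.
  case: (ltnP i n.+1) => Hi.
    rewrite /Ei (bigD1 (Ordinal Hi)) //= eqxx muln1.
    exact: leq_trans (tpart_tail i H) (leq_addr _ _).
  rewrite /Sm big1 // => k _; rewrite (_ : i <= k = false) ?muln0 //.
  apply/negbTE; rewrite -ltnNge; exact: leq_trans (ltn_ord k) Hi.
lia.
Qed.
End Nat2.

Section Alg2.
Set Implicit Arguments. Unset Strict Implicit.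
Local Open Scope ring_scope.

Lemma mup_prod_dvd (F : closedFieldType) (r : seq F) (q : {poly F}) : q != 0 ->
  (forall z, (count_mem z r <= mup z q)%N) -> \prod_(z <- r) ('X - z%:P) %| q.
Proof.
elim: r q => [|z r IH] q Hq Hc; first by rewrite big_nil dvd1p.
have Hz : ('X - z%:P) %| q.
  by rewrite XsubC_dvd //; apply: leq_trans (Hc z); rewrite /= eqxx.
have Hq' : q = q %/ ('X - z%:P) * ('X - z%:P) by apply/eqP; rewrite -dvdp_eq.
set q' := q %/ ('X - z%:P) in Hq'.
have Hq'0 : q' != 0 by apply: contra Hq => /eqP H; rewrite Hq' H mul0r.
rewrite big_cons Hq' (mulrC q') dvdp_mul2l ?polyXsubC_eq0 //.
apply: IH => // w; have := Hc w; rewrite Hq' mupM ?polyXsubC_eq0 //.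
rewrite -(expr1 ('X - z%:P)) mup_XsubCX /=; case: (z == w) => /=; lia.
Qed.

Lemma mup_dvd (F : closedFieldType) (p q : {poly F}) : p != 0 -> q != 0 ->
  (forall z, (mup z p <= mup z q)%N) -> p %| q.
Proof.
move=> Hp Hq Hm; have [r Hr] := closed_field_poly_normal p.
have Hl : lead_coef p != 0 by rewrite lead_coef_eq0.
rewrite Hr dvdpZl //; apply: mup_prod_dvd => // z.
apply: leq_trans (Hm z); rewrite {1}Hr -mul_polyC mupM ?polyC_eq0 //.
  by rewrite mupNroot ?rootC // mu_prod_XsubC.
by rewrite monic_neq0 // monic_prod_XsubC.
Qed.

Lemma mup_le_dvd (F : fieldType) (z : F) (p q : {poly F}) : p != 0 -> q != 0 -> p %| q ->
  (mup z p <= mup z q)%N.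
Proof.
move=> Hp Hq Hpq; rewrite mup_geq //; apply: dvdp_trans Hpq; rewrite -mup_geq //.
Qed.

Lemma transfer (d p : {poly int}) : d \is monic -> phi d %| phi p -> dvdZ d p.
Proof.
move=> Hd Hdp.
have E := Pdiv.RingMonic.rdivp_eq Hd p.
set q := Pdiv.Ring.rdivp p d in E; set r := Pdiv.Ring.rmodp p d in E.
have Hs : (size r < size d)%N by apply: Pdiv.Ring.ltn_rmodpN0; exact: monic_neq0.
have Hr : phi r = 0.
  apply/eqP; apply: contraLR Hs => Hr; rewrite -leqNgt -(size_phi d) -(size_phi r).
  apply: dvdp_leq => //.
  have : phi d %| phi q * phi d + phi r by rewrite -phiM /phi -rmorphD -E.
  by rewrite dvdp_addr // dvdp_mull.
have Hr0 : r = 0 by apply: phi_inj; rewrite Hr /phi rmorph0.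
by exists q; rewrite {1}E Hr0 addr0.
Qed.

Lemma bmono (z : algC) k k' : (k <= k')%N -> z ^+ (3 ^ k) == -1 -> z ^+ (3 ^ k') == -1.
Proof.
move=> H; elim: k' H => [|k' IH]; first by rewrite leqn0 => /eqP ->.
rewrite leq_eqVlt => /orP[/eqP -> //|]; rewrite ltnS => /IH H /H /eqP Hz.
by rewrite expnSr exprM Hz -signr_odd /= expr1.
Qed.

Lemma b_struct (z : algC) n : exists2 i, (i <= n.+1)%N &
  forall k, (k < n.+1)%N -> (z ^+ (3 ^ k) == -1) = (i <= k)%N.
Proof.
case: (boolP [exists k : 'I_n.+1, z ^+ (3 ^ k) == -1]).
  case/existsP => k0 Hk0.
  have ex : exists j, (j < n.+1)%N && (z ^+ (3 ^ j) == -1) by exists k0; rewrite ltn_ord.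
  case: (ex_minnP ex) => i /andP[Hi Hbi] Hmin.
  exists i; first exact: ltnW.
  move=> k Hk; apply/idP/idP => [Hbk|Hik]; last exact: bmono Hbi.
  by apply: Hmin; rewrite Hk.
rewrite negb_exists => /forallP H; exists n.+1 => // k Hk.
by rewrite leqNgt Hk; apply/negbTE; exact: (H (Ordinal Hk)).
Qed.

Definition Gp n : {poly int} := \prod_(k < n) (1 + 'X^(3 ^ k)) ^+ (n %/ 3 ^ k.+1)%N.

Lemma monicA (R : nzRingType) k : (1 + 'X^(3 ^ k) : {poly R}) \is monic.
Proof. by rewrite addrC -polyC1 monicXnaddC // expn_gt0. Qed.

Lemma monic_hT n l : hT n l \is monic.
Proof. by apply: monic_prod => k _; apply: monic_exp; exact: monicA. Qed.

Lemma monic_Gp n : Gp n \is monic.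
Proof. by apply: monic_prod => k _; apply: monic_exp; exact: monicA. Qed.

Lemma phi_neq0 p : p \is monic -> phi p != 0.
Proof. by move=> Hp; rewrite -size_poly_eq0 size_phi size_poly_eq0 monic_neq0. Qed.

Lemma phi_prod (I : Type) (r : seq I) (f a : I -> nat) :
  phi (\prod_(k <- r) (1 + 'X^(3 ^ f k)) ^+ a k) = \prod_(k <- r) (1 + 'X^(3 ^ f k)) ^+ a k.
Proof.
rewrite /phi rmorph_prod; apply: eq_bigr => k _; rewrite rmorphXn; congr (_ ^+ _).
exact: phiA.
Qed.

Definition bz (z : algC) (k : nat) : bool := z ^+ (3 ^ k) == -1.

Lemma mup_phi (z : algC) (I : Type) (r : seq I) (f a : I -> nat) :
  mup z (phi (\prod_(k <- r) (1 + 'X^(3 ^ f k)) ^+ a k)) =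
  (\sum_(k <- r) a k * bz z (f k))%N.
Proof.
rewrite phi_prod mup_prodX; last by move=> k; apply: monic_neq0; exact: monicA.
by apply: eq_bigr => k _; rewrite mupA // expn_gt0.
Qed.

Lemma mup_hT (z : algC) n l i : (forall k, (k < n.+1)%N -> bz z k = (i <= k)%N) ->
  mup z (phi (hT n l)) = Mh n i l.
Proof.
move=> Hb; rewrite /hT (mup_phi z _ (fun k : 'I_n.+1 => nat_of_ord k)) /Mh.
by apply: eq_bigr => k _; rewrite Hb.
Qed.

Lemma mup_Gp (z : algC) n i : (forall k, (k < n.+1)%N -> bz z k = (i <= k)%N) ->
  mup z (phi (Gp n)) = MG n i.
Proof.
move=> Hb; rewrite /Gp (mup_phi z _ (fun k : 'I_n => nat_of_ord k)) /MG.
by apply: eq_bigr => k _; rewrite Hb // ltnS ltnW.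
Qed.

Lemma dvdZ_phi d p : dvdZ d p -> phi d %| phi p.
Proof. by case=> q ->; rewrite phiM dvdp_mull. Qed.

Lemma lam_in n i : hT n (lam n i) \in [seq hT n l | l <- tparts n].
Proof. by apply: map_f; rewrite mem_tparts lam_tpart. Qed.

Lemma Gp_gcd n : is_gcdZ [seq hT n l | l <- tparts n] (Gp n).
Proof.
split; [|split].
- move=> p /mapP [l Hl ->]; rewrite mem_tparts in Hl.
  apply: transfer (monic_Gp n) _.
  apply: mup_dvd; [exact/phi_neq0/monic_Gp | exact/phi_neq0/monic_hT | move=> z].
  have [i Hi Hb] := b_struct z n.
  rewrite (mup_hT l Hb) (mup_Gp Hb); exact: Mh_ge.
- move=> d Hd.
  have [q0 Hq0] := Hd _ (lam_in n 0).
  have Hl : lead_coef q0 * lead_coef d = 1.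
    by rewrite -lead_coefM -Hq0; apply/eqP; exact: monic_hT.
  have [c Hcd] : exists c, c = lead_coef d by eexists.
  rewrite -Hcd in Hl.
  have Hc : c * c = 1.
    have := intUnitRing.unitzPl Hl; rewrite qualifE /=.
    by case/orP => /eqP E; rewrite E.
  have HcP : c%:P * c%:P = 1 by rewrite -polyCM Hc.
  pose d' := c%:P * d.
  have Hdm : d' \is monic by rewrite monicE /d' lead_coefM lead_coefC -Hcd Hc.
  have Hd' : forall p, p \in [seq hT n l | l <- tparts n] -> dvdZ d' p.
    move=> p Hp; have [q Hq] := Hd p Hp; exists (q * c%:P).
    by rewrite Hq /d' mulrA -(mulrA q) HcP mulr1.
  have [q Hq] : dvdZ d' (Gp n).
    apply: (transfer Hdm).
    apply: mup_dvd; [exact: phi_neq0 Hdm | exact/phi_neq0/monic_Gp | move=> z].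
    have [i Hi Hb] := b_struct z n.
    have H1 := mup_le_dvd z (phi_neq0 Hdm) (phi_neq0 (monic_hT n (lam n i)))
      (dvdZ_phi (Hd' _ (lam_in n i))).
    by rewrite (mup_hT _ Hb) Mh_lam -(mup_Gp Hb) in H1.
  by exists (q * c%:P); rewrite Hq /d' mulrA.
- by rewrite (eqP (monic_Gp n)) ltr01.
Qed.

Lemma gcd_unique s g1 g2 : is_gcdZ s g1 -> is_gcdZ s g2 -> g1 = g2.
Proof.
case=> H1a [H1b H1c] [H2a [H2b H2c]].
have [q1 E1] : dvdZ g1 g2 := H2b g1 H1a.
have [q2 E2] : dvdZ g2 g1 := H1b g2 H2a.
have g1n0 : g1 != 0 by apply: contraTneq H1c => ->; rewrite lead_coef0 ltxx.
have Hq : q2 * q1 = 1.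
  by apply: (mulIf g1n0); rewrite mul1r -mulrA -E1 -E2.
have Hu1 : q1 \is a GRing.unit by apply/unitrP; exists q2; rewrite Hq mulrC Hq.
move: Hu1; rewrite poly_unitE => /andP[/size_poly1P [c1 _ Hc1] Hu].
rewrite Hc1 coefC /= in Hu.
case/unitrP: Hu => y [Hy _].
have := intUnitRing.unitzPl Hy.
rewrite qualifE /= => /orP[/eqP Ec|/eqP Ec].
  by rewrite E1 Hc1 Ec mul1r.
move: H2c; rewrite E1 Hc1 Ec lead_coefM lead_coefC mulN1r oppr_gt0 ltNge.
by rewrite (ltW H1c).
Qed.

Lemma GT_eq n : GT n = Gp n.
Proof.
rewrite /GT; apply: gcd_unique (Gp_gcd n).
apply: epsilon_spec; exists (Gp n); exact: Gp_gcd.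
Qed.

Lemma dvdZ_sum (g : {poly int}) (I : eqType) (r : seq I) (F : I -> {poly int}) :
  (forall l, l \in r -> dvdZ g (F l)) -> dvdZ g (\sum_(l <- r) F l).
Proof.
elim: r => [|x r IH] H; first by exists 0; rewrite big_nil mul0r.
have [q1 E1] := H x (mem_head _ _).
have [q2 E2] : dvdZ g (\sum_(l <- r) F l).
  by apply: IH => l Hl; apply: H; rewrite in_cons Hl orbT.
by exists (q1 + q2); rewrite big_cons E1 E2 mulrDl.
Qed.

Lemma numT_eq n : numT n * Gp n = \sum_(l <- tparts n) hT n l.
Proof.
rewrite -GT_eq /numT; apply: (epsilon_spec (inhabits 0) (fun q => q * GT n = _)).
have [q Hq] : dvdZ (GT n) (\sum_(l <- tparts n) hT n l).
  apply: dvdZ_sum => l Hl; rewrite GT_eq; case: (Gp_gcd n) => H _.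
  by apply: H; exact: map_f.
by exists q.
Qed.

Lemma hornerA1 k : (1 + 'X^(3 ^ k) : {poly int}).[1] = 2.
Proof. by rewrite hornerD hornerXn expr1n hornerC. Qed.

Lemma Gp1 n : (Gp n).[1] = 2 ^+ (\sum_(k < n) n %/ 3 ^ k.+1)%N.
Proof.
rewrite /Gp horner_prod -prodrXr; apply: eq_bigr => k _.
by rewrite horner_exp hornerA1.
Qed.

Lemma hT1 n l : (hT n l).[1] = 2 ^+ (\sum_(k < n.+1) (n %/ 3 ^ k - count_mem (3 ^ k) l))%N.
Proof.
rewrite /hT horner_prod -prodrXr; apply: eq_bigr => k _.
by rewrite horner_exp hornerA1.
Qed.

Lemma hT_exp n l : is_tpart n l ->
  (\sum_(k < n.+1) (n %/ 3 ^ k - count_mem (3 ^ k) l) =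
   (n - size l) + \sum_(k < n) n %/ 3 ^ k.+1)%N.
Proof.
move=> H.
have E1 : (\sum_(k < n.+1) (n %/ 3 ^ k - count_mem (3 ^ k) l) + \sum_(k < n.+1) count_mem (3 ^ k) l
   = \sum_(k < n.+1) n %/ 3 ^ k)%N.
  by rewrite -big_split; apply: eq_bigr => k _ /=; rewrite subnK // tpart_le.
have E2 : (\sum_(k < n.+1) n %/ 3 ^ k = n + \sum_(k < n) n %/ 3 ^ k.+1)%N.
  by rewrite big_ord_recl /= expn0 divn1.
have E3 := tpart_size H.
have E4 : (size l <= n)%N.
  by case/and4P: H => _ Hpos _ /eqP <-; exact: size_le_sumn.
lia.
Qed.

Lemma t_tw n : t n = (tw n)%:Z.
Proof.
case: n => [|n]; first by rewrite /t /tw /tparts /= big_cons big_nil.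
rewrite /t /=.
set X := (\sum_(k < n.+1) n.+1 %/ 3 ^ k.+1)%N.
have H2 : (2 : int) ^+ X != 0 by rewrite expf_neq0.
apply: (mulIf H2).
have := congr1 (horner^~ 1) (numT_eq n.+1); rewrite hornerM Gp1 -/X => ->.
rewrite horner_sum /tw -natz natr_sum mulr_suml big_seq [RHS]big_seq.
apply: eq_bigr => l; rewrite mem_tparts => Hl.
by rewrite hT1 hT_exp // exprD natrX.
Qed.
End Alg2.

Local Open Scope ring_scope.

Theorem theorem5 :
  (forall n : nat, t (3 * n) = t (3 * n + 1) /\ t (3 * n + 1) = t (3 * n + 2)) /\
  (forall n : nat, (1 <= n)%N ->
     t (3 * n) - t (3 * n - 2) = 2 ^+ (2 * n) * t n).
Proof.
split.
  move=> n; rewrite !t_tw !(tw_rec (3 * n)) !(tw_rec (3 * n + 1)) !(tw_rec (3 * n + 2)).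
  have -> : ((3 * n) %/ 3 = n)%N by lia.
  have -> : ((3 * n + 1) %/ 3 = n)%N by lia.
  have -> : ((3 * n + 2) %/ 3 = n)%N by lia.
  by [].
move=> n Hn; rewrite !t_tw (tw_rec (3 * n)) (tw_rec (3 * n - 2)).
have -> : ((3 * n) %/ 3 = n)%N by lia.
have -> : ((3 * n - 2) %/ 3 = n.-1)%N by lia.
rewrite big_ord_recr /= prednK // PoszD addrAC subrr add0r PoszM.
by rewrite exprM -natz natrX.
Qed.
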